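(* Let $K \ge 2$ be an integer and let $\tilde{\mathbf A} \in \mathbb{R}^{2K^2 \times K^2}$ be the real lifted shear operator defined in the context. Let $\tilde{\mathbf B} \in \mathbb{R}^{K^2 \times 2K^2}$, $\tilde{\boldsymbol\gamma} \in \mathbb{R}^{2K^2}$, $\tau > 0$, and let $D : \mathbb{R}^{K^2} \to \mathbb{R}^{K^2}$ be a map (the denoiser). Set $\mathbb V := (\ker \tilde{\mathbf B}\tilde{\mathbf A})^\perp \subset \mathbb{R}^{K^2}$. Define the forward operator $F_{\tilde{\boldsymbol\gamma}}(\boldsymbol\kappa',\tau) := \boldsymbol\kappa' + \tau \tilde{\mathbf B}(\tilde{\boldsymbol\gamma} - \tilde{\mathbf A}\boldsymbol\kappa')$ for $\boldsymbol\kappa' \in \mathbb{R}^{K^2}$, and the operator $T_{\tilde{\boldsymbol\gamma}}(\cdot,\tau) := D \circ F_{\tilde{\boldsymbol\gamma}}(\cdot,\tau)$. Assume: (i) $D$ maps $\mathbb V$ into $\mathbb V$; (ii) $D$ is non-expansive on $\mathbb V$, i.e. $\|D(\mathbf x) - D(\mathbf y)\| \le \beta \|\mathbf x - \mathbf y\|$ for all $\mathbf x, \mathbf y \in \mathbb V$ for some $\beta \le 1$; (iii) $\tilde{\mathbf B}\tilde{\mathbf A}$ is symmetric positive semidefinite (and nonzero); (iv) $\operatorname{im} \tilde{\mathbf B} \subset \mathbb V$; (v) letting $\lambda_{\min}$ and $\lambda_{\max} = \|\tilde{\mathbf B}\tilde{\mathbf A}\|$ denote respectively the smallest and largest nonzero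 eigenvalues of $\tilde{\mathbf B}\tilde{\mathbf A}$, and $\rho^\star := \frac{\lambda_{\max} - \lambda_{\min}}{\lambda_{\max} + \lambda_{\min}}$, we have for some fixed $\rho \in [\rho^\star, 1)$ that $$\frac{1-\rho}{\lambda_{\min}} \le \tau \le \frac{1+\rho}{\lambda_{\max}}.$$ Then $T_{\tilde{\boldsymbol\gamma}}(\cdot,\tau)$ admits a unique fixed point $\hat{\boldsymbol\kappa} \in \mathbb V$. Moreover, for any $\boldsymbol\kappa^{(0)} \in \mathbb V$, the sequence defined by $\boldsymbol\kappa^{(k+1)} = T_{\tilde{\boldsymbol\gamma}}(\boldsymbol\kappa^{(k)},\tau)$ converges linearly to $\hat{\boldsymbol\kappa}$ with rate $\rho$, i.e. $\|\boldsymbol\kappa^{(k)} - \hat{\boldsymbol\kappa}\| \le \rho^k \|\boldsymbol\kappa^{(0)} - \hat{\boldsymbol\kappa}\|$ for all $k \in \mathbb N$.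
   Context: Vectors in $\mathbb{R}^{K^2}$ or $\mathbb{C}^{K^2}$ represent $K\times K$ images flattened, with pixel $(k_1,k_2)$, $0\le k_1,k_2\le K-1$, at index $Kk_1+k_2$. Let $\mathbf F \in \mathbb{C}^{K^2\times K^2}$ be the (unitary) 2D discrete Fourier transform and $\mathbf F^{H}$ its conjugate transpose. Let $\mathbf P$ be the diagonal matrix with $\mathbf P[0,0]=0$ and $\mathbf P[Kk_1+k_2, Kk_1+k_2] = \frac{(k_1 + i k_2)^2}{k_1^2+k_2^2}$ for $(k_1,k_2) \ne (0,0)$. Set $\mathbf A := \mathbf F^H \mathbf P \mathbf F \in \mathbb{C}^{K^2\times K^2}$ and $\tilde{\mathbf A} := \begin{pmatrix} \operatorname{Re}\mathbf A \\ \operatorname{Im}\mathbf A\end{pmatrix} \in \mathbb{R}^{2K^2\times K^2}$. Norms are Euclidean norms (operator norm for matrices). *)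

(* Defs.v *)
From HB Require Import structures.
From mathcomp Require Import all_boot all_order all_algebra.
From mathcomp Require Import reals trigo.
From mathcomp Require Import complex.
Set Implicit Arguments. Unset Strict Implicit. Unset Printing Implicit Defensive.
Import Order.TTheory GRing.Theory Num.Theory.
Local Open Scope ring_scope.

Notation C R := (complex.complex R).

Section Shear.
Variable R : realType.
Variable K : nat.

Definition pix1 (i : 'I_(K * K)) : nat := (i %/ K)%N.
Definition pix2 (i : 'I_(K * K)) : nat := (i %% K)%N.

Definition cexp (t : R) : C R := complex.Complex (cos t) (sin t).

Definition DFT2 : 'M[C R]_(K * K) :=
  \matrix_(i, j)
    (complex.Complex (K%:R)^-1 0 * cexp (- (2 * pi) * ((pix1 i * pix1 j + pix2 i * pix2 j)%N%:R)
                           / K%:R))%R.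

Definition conjT (M : 'M[C R]_(K * K)) : 'M[C R]_(K * K) :=
  \matrix_(i, j) complex.conjc (M j i).

Definition Pdiag : 'M[C R]_(K * K) :=
  \matrix_(i, j)
    (if i == j then
       (if ((pix1 i == 0) && (pix2 i == 0))%N then 0
        else (complex.Complex (pix1 i)%:R (pix2 i)%:R) ^+ 2
             / complex.Complex ((pix1 i ^ 2 + pix2 i ^ 2)%N%:R) 0)
     else 0).

Definition Ashear : 'M[C R]_(K * K) := conjT DFT2 *m Pdiag *m DFT2.

Definition Atilde : 'M[R]_(K * K + K * K, K * K) :=
  col_mx (map_mx (@complex.Re R) Ashear) (map_mx (@complex.Im R) Ashear).

End Shear.

Section Euclid.
Variable R : realType.
Variable n : nat.

Definition dotv (x y : 'cV[R]_n) : R := \sum_i x i 0 * y i 0.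
Definition norm2 (x : 'cV[R]_n) : R := Num.sqrt (dotv x x).

Definition ker_perp m (M : 'M[R]_(m, n)) (x : 'cV[R]_n) : Prop :=
  forall y : 'cV[R]_n, M *m y = 0 -> dotv x y = 0.
End Euclid.

(* Main.v *)
Require Import Defs.
From HB Require Import structures.
From mathcomp Require Import all_boot all_order all_algebra.
From mathcomp Require Import reals complex sesquilinear spectral lra.
From mathcomp Require Import classical_sets.
Import Order.TTheory GRing.Theory Num.Theory.
Set Implicit Arguments. Unset Strict Implicit. Unset Printing Implicit Defensive.
Local Open Scope ring_scope.
Lemma ker_perp_range (R : realType) n (M : 'M[R]_n) : M^T = M ->
  forall z : 'cV[R]_n, ker_perp M z -> exists y : 'rV[R]_n, z^T = y *m M.
Proof.
move=> Msym z Hz.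
set Kr := kermx M.
have h1 : (z^T <= kermx Kr^T)%MS.
  apply/sub_kermxP; apply/rowP => j; rewrite !mxE.
  have := Hz (row j Kr)^T.
  rewrite /dotv => H; rewrite -[RHS]H; last first.
    rewrite -[M]Msym -trmx_mul; apply/eqP; rewrite trmx_eq0; apply/eqP.
    by rewrite -row_mul mulmx_ker row0.
  apply: eq_bigr => k _; rewrite !mxE //.
have h2 : (M <= kermx Kr^T)%MS.
  apply/sub_kermxP; rewrite -{1}Msym -trmx_mul mulmx_ker trmx0 //.
have h3 : (kermx Kr^T <= M)%MS.
  have := mxrank_leqif_eq h2.
  have -> : \rank (kermx Kr^T) = \rank M.
    by rewrite mxrank_ker mxrank_tr mxrank_ker subKn ?rank_leq_row.
  by move=> /leqif_refl /andP [].
have /submxP [y ->] := submx_trans h1 h3.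
by exists y.
Qed.
Section Aux.
Variable R : realType.

Lemma bern (q : R) n : 0 <= q -> q <= 1 -> q ^+ n * (1 + n%:R * (1 - q)) <= 1.
Proof.
move=> q0 q1; elim: n => [|n IH]; first by rewrite expr0 mul0r addr0 mul1r.
rewrite exprS -nat1r.
have h1 : 0 <= q ^+ n by apply: exprn_ge0.
have h2 : q ^+ n <= 1 by apply: exprn_ile1.
move: IH h1 h2; set p := q ^+ n => IH h1 h2.
have h3 : q * (p * (1 + n%:R * (1 - q))) <= q * 1 by apply: ler_wpM2l.
have h4 : 0 <= (1 - q) * (1 - q * p) by apply: mulr_ge0; nra.
nra.
Qed.

Lemma geo0 (x E q : R) : 0 <= q -> q < 1 -> (forall n, x <= E * q ^+ n) -> x <= 0.
Proof.
move=> q0 q1 H; rewrite leNgt; apply/negP => x0.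
have E0 : x <= E by have := H 0%N; rewrite expr0 mulr1.
have hb : 0 <= E / (x * (1 - q)) by apply: divr_ge0; nra.
have := archi_boundP hb; set m := Num.bound _ => hm.
have := H m; have := bern m q0 (ltW q1).
have hm' : E < m%:R * (x * (1 - q)).
  by rewrite -ltr_pdivrMr //; nra.
have h1 : 0 <= q ^+ m by apply: exprn_ge0.
move: hm'; set p := q ^+ m; set k : R := m%:R => hm' Hb Hx.
have k0 : 0 <= k by rewrite ler0n.
have c0 : 0 <= 1 + k * (1 - q) by nra.
have i1 : x * (1 + k * (1 - q)) <= E * p * (1 + k * (1 - q)) by apply: ler_wpM2r.
have i2 : E * (p * (1 + k * (1 - q))) <= E * 1 by apply: ler_wpM2l; nra.
nra.
Qed.

Lemma mul_self_ge0 (x : R) : 0 <= x * x.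
Proof. by rewrite -expr2 sqr_ge0. Qed.

Variable n : nat.
Implicit Types x y z : 'cV[R]_n.

Lemma dotvE x y : dotv x y = (x^T *m y) 0 0.
Proof. by rewrite /dotv mxE; apply: eq_bigr => i _; rewrite mxE. Qed.

Lemma dotvDl x y z : dotv (x + y) z = dotv x z + dotv y z.
Proof. by rewrite !dotvE linearD mulmxDl mxE. Qed.

Lemma dotvZl a x z : dotv (a *: x) z = a * dotv x z.
Proof. by rewrite !dotvE linearZ -scalemxAl mxE. Qed.

Lemma dotvNl x z : dotv (- x) z = - dotv x z.
Proof. by rewrite -scaleN1r dotvZl mulN1r. Qed.

Lemma dotvBl x y z : dotv (x - y) z = dotv x z - dotv y z.
Proof. by rewrite dotvDl dotvNl. Qed.

Lemma dotv0l z : dotv 0 z = 0.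
Proof. by rewrite /dotv big1 // => i _; rewrite mxE mul0r. Qed.

Lemma dotv_ge0 x : 0 <= dotv x x.
Proof. by apply: sumr_ge0 => i _; apply: mul_self_ge0. Qed.

Lemma coord_le x i : `|x i 0| <= norm2 x.
Proof.
rewrite /norm2 -(sqrtr_sqr (x i 0)) ler_sqrt ?dotv_ge0 // /dotv.
rewrite (bigD1 i) //= -expr2 lerDl; apply: sumr_ge0 => j _; exact: mul_self_ge0.
Qed.

Lemma norm2_ge0 x : 0 <= norm2 x.
Proof. exact: sqrtr_ge0. Qed.

Lemma norm2_coord_bound x e : 0 <= e -> (forall i, `|x i 0| <= e) ->
  norm2 x <= Num.sqrt n%:R * e.
Proof.
move=> e0 H; rewrite /norm2 -(ger0_norm e0) -sqrtr_sqr -sqrtrM ?ler0n //.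
rewrite ler_sqrt; last by apply: mulr_ge0; [rewrite ler0n| exact: sqr_ge0].
apply: (@le_trans _ _ (\sum_(i < n) `|e| ^+ 2)).
  rewrite /dotv; apply: ler_sum => i _.
  rewrite -expr2 -(real_normK (num_real (x i 0))) (ger0_norm e0).
  by rewrite lerXn2r ?nnegrE ?normr_ge0.
by rewrite sumr_const card_ord mulr_natl (ger0_norm e0).
Qed.

Lemma dotv_eq0 x : dotv x x = 0 -> x = 0.
Proof.
move=> /eqP; rewrite psumr_eq0 => [/allP H|i _]; last exact: mul_self_ge0.
apply/matrixP => i j; rewrite ord1 mxE; apply/eqP.
by have := H i (mem_index_enum _); rewrite -expr2 sqrf_eq0.
Qed.

Lemma norm2_eq0 x : norm2 x = 0 -> x = 0.
Proof.
move=> h; apply: dotv_eq0; move: h; rewrite /norm2 => /eqP.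
by rewrite sqrtr_eq0 => h; apply/eqP; rewrite eq_le h dotv_ge0.
Qed.

End Aux.
Section Core.
Variable R : realType.
Local Notation C := (complex.complex R).
Local Notation rc := (real_complex R).

Definition nrm2c n (u : 'rV[C]_n) : C := \sum_i u 0 i * (u 0 i)^*.

Lemma nrm2cE n (u : 'rV[C]_n) : nrm2c u = (u *m map_mx Num.conj u^T) 0 0.
Proof. rewrite /nrm2c !mxE; apply: eq_bigr => i _; rewrite !mxE //. Qed.

Lemma nrm2c_unitary n (u : 'rV[C]_n) (P : 'M[C]_n) :
  P \is unitarymx -> nrm2c (u *m P) = nrm2c u.
Proof.
move=> /unitarymxP PP.
by rewrite !nrm2cE trmx_mul map_mxM mulmxA -(mulmxA u) PP mulmx1.
Qed.

Lemma rc_real (r : R) : rc r \is Num.real.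
Proof. by apply/complex_realP; exists r. Qed.

Lemma nrm2c_real n (x : 'rV[R]_n) :
  nrm2c (map_mx rc x) = rc (\sum_i (x 0 i) ^+ 2).
Proof.
rewrite rmorph_sum /nrm2c; apply: eq_bigr => i _.
by rewrite !mxE conj_Creal ?rc_real // rmorphXn expr2.
Qed.


Lemma contract_sq n (M : 'M[R]_n) (t rho : R) :
  M^T = M ->
  (forall r, r != 0 -> eigenvalue M r -> (1 - t * r) ^+ 2 <= rho ^+ 2) ->
  forall y : 'rV[R]_n,
  \sum_i (((y *m M) - t *: ((y *m M) *m M)) 0 i) ^+ 2
    <= rho ^+ 2 * \sum_i ((y *m M) 0 i) ^+ 2.
Proof.
move=> Msym Heig y.
set Mc := map_mx rc M.
have Mh : Mc \is hermsymmx.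
  apply/is_hermitianmxP; rewrite expr0 scale1r; apply/matrixP => i j.
  rewrite !mxE conj_Creal ?rc_real //.
  by rewrite -[in LHS]Msym mxE.
have /orthomx_spectralP hMc := hermitian_normalmx Mh.
have Punit := spectral_unitarymx Mc.
have Pu := spectral_unit Mc.
move: hMc.
set P := spectralmx Mc; set d := spectral_diag Mc.
rewrite (invmx_unitary Punit).
set Ps := map_mx Num.conj P^T => hMc.
have hPP : P *m Ps = 1%:M by apply/unitarymxP.
have hPsP : Ps *m P = 1%:M by rewrite /Ps /P -(invmx_unitary Punit) mulVmx.
have hPM : P *m Mc = diag_mx d *m P by rewrite hMc !mulmxA hPP mul1mx.
set v := map_mx rc y *m Ps.
set a := v *m diag_mx d.
have hx : map_mx rc (y *m M) = a *m P.
  by rewrite map_mxM -/Mc hMc /a /v !mulmxA.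
have hxM : map_mx rc ((y *m M) *m M) = a *m diag_mx d *m P.
  by rewrite map_mxM hx -/Mc -mulmxA hPM mulmxA.
set b := a - rc t *: (a *m diag_mx d).
have hl : map_mx rc (y *m M - t *: (y *m M *m M)) = b *m P.
  by rewrite map_mxB map_mxZ hx hxM /b mulmxBl scalemxAl.
suff : nrm2c (map_mx rc (y *m M - t *: (y *m M *m M))) <=
   rc (rho ^+ 2) * nrm2c (map_mx rc (y *m M)).
  by rewrite !nrm2c_real -rmorphM lecR.
rewrite hl hx (nrm2c_unitary b Punit) (nrm2c_unitary a Punit).
rewrite /nrm2c mulr_sumr; apply: ler_sum => i _.
have dreal : d 0 i \is Num.real.
  by have /mxOverP := hermitian_spectral_diag_real Mh; apply.
have [r dr] := complex_realP _ dreal.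
have ha : a 0 i = v 0 i * d 0 i by rewrite /a mul_mx_diag mxE.
clearbody a.
have hb : b 0 i = a 0 i * rc (1 - t * r).
  rewrite /b mul_mx_diag !mxE dr rmorphB rmorph1 rmorphM.
  by rewrite mulrBr mulr1 mulrCA mulrA.
rewrite hb rmorphM /= (conj_Creal (rc_real _)).
have [r0|rn0] := eqVneq r 0.
  by rewrite ha dr r0 rmorph0 !mulr0 !mul0r mulr0.
have eigr : eigenvalue M r.
  suff : eigenvalue Mc (d 0 i) by rewrite dr /Mc eigenvalue_map.
  apply/eigenvalueP; exists (row i P).
    by rewrite -row_mul hPM mul_diag_mx; apply/rowP => j; rewrite !mxE.
  apply/eqP => h0; have := congr1 (row i) hPP; rewrite row_mul h0 mul0mx.
  by move/rowP/(_ i); rewrite !mxE eqxx /= => /eqP; rewrite eq_sym oner_eq0.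
rewrite mulrACA -expr2 -rmorphXn mulrC; apply: ler_wpM2r; first exact: mul_conjC_ge0.
by rewrite lecR; apply: Heig.
Qed.

End Core.

Lemma dotvZr (R : realType) n (a : R) (x y : 'cV[R]_n) : dotv x (a *: y) = a * dotv x y.
Proof. by rewrite !dotvE -scalemxAr mxE. Qed.

Lemma dotv_tr (R : realType) n (u : 'cV[R]_n) : dotv u u = \sum_i (u^T 0 i) ^+ 2.
Proof. by rewrite /dotv; apply: eq_bigr => i _; rewrite mxE expr2. Qed.

Theorem proposition1 (R : realType) (K : nat) (hK : (2 <= K)%N)
  (B : 'M[R]_(K * K, K * K + K * K)) (gamma : 'cV[R]_(K * K + K * K))
  (tau : R) (htau : 0 < tau)
  (D : 'cV[R]_(K * K) -> 'cV[R]_(K * K))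
  (lmin lmax rho : R) :
  let BA := B *m Atilde R K in
  let V := ker_perp BA in
  let Fw := fun kap : 'cV[R]_(K * K) => kap + tau *: (B *m (gamma - Atilde R K *m kap)) in
  let T := fun kap => D (Fw kap) in
  (* (i) *) (forall x, V x -> V (D x)) ->
  (* (ii) *) (exists beta : R, beta <= 1 /\
       forall x y, V x -> V y -> norm2 (D x - D y) <= beta * norm2 (x - y)) ->
  (* (iii) *) BA^T = BA -> (forall v : 'cV[R]_(K * K), 0 <= dotv v (BA *m v)) ->
     BA != 0 ->
  (* (iv) *) (forall w : 'cV[R]_(K * K + K * K), V (B *m w)) ->
  (* (v) lmin, lmax: smallest / largest nonzero eigenvalues of BA *)
  lmin != 0 -> eigenvalue BA lmin ->
  (forall l, l != 0 -> eigenvalue BA l -> lmin <= l) ->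
  lmax != 0 -> eigenvalue BA lmax ->
  (forall l, l != 0 -> eigenvalue BA l -> l <= lmax) ->
  (lmax - lmin) / (lmax + lmin) <= rho -> rho < 1 ->
  (1 - rho) / lmin <= tau -> tau <= (1 + rho) / lmax ->
  exists khat : 'cV[R]_(K * K),
    [/\ V khat, T khat = khat,
        (forall k', V k' -> T k' = k' -> k' = khat) &
        forall k0, V k0 -> forall k : nat,
          norm2 (iter k T k0 - khat) <= rho ^+ k * norm2 (k0 - khat)].
Proof.
move=> BA V Fw T HDV [beta [hb1 HDc]] BAsym BApsd BAn0 HBV lmin0 lmin_e lmin_min
  lmax0 lmax_e lmax_max _ hrho1 htau1 htau2.
have V0 : V 0 by move=> w _; rewrite dotv0l.
have VD : forall x y, V x -> V y -> V (x + y).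
  by move=> x y hx hy w hw; rewrite dotvDl hx ?hy ?addr0.
have VZ : forall a x, V x -> V (a *: x).
  by move=> a x hx w hw; rewrite dotvZl hx ?mulr0.
have VB : forall x y, V x -> V y -> V (x - y).
  by move=> x y hx hy; apply: VD => //; rewrite -scaleN1r; apply: VZ.
have lmin_pos : 0 < lmin.
  have /eigenvalueP [v hv v0] := lmin_e.
  have hc : BA *m v^T = lmin *: v^T by rewrite -{1}BAsym -trmx_mul hv linearZ.
  have := BApsd v^T; rewrite hc dotvZr => h.
  have dv0 : 0 < dotv v^T v^T.
    rewrite lt_def dotv_ge0 andbT; apply/eqP => /dotv_eq0 /eqP.
    by rewrite trmx_eq0 (negbTE v0).
  have : 0 <= lmin by nra.
  by rewrite le_eqVlt eq_sym (negbTE lmin0).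
have lminmax : lmin <= lmax by apply: lmax_max.
have lmax_pos : 0 < lmax by apply: lt_le_trans lminmax.
have ht1 : 1 - rho <= tau * lmin by rewrite -ler_pdivrMr.
have ht2 : tau * lmax <= 1 + rho by rewrite -ler_pdivlMr.
have rho0 : 0 <= rho.
  have : tau * lmin <= tau * lmax by rewrite ler_pM2l.
  lra.
have eigb : forall r, r != 0 -> eigenvalue BA r -> (1 - tau * r) ^+ 2 <= rho ^+ 2.
  move=> r r0 er.
  have h1 : tau * lmin <= tau * r by rewrite ler_pM2l //; apply: lmin_min.
  have h2 : tau * r <= tau * lmax by rewrite ler_pM2l //; apply: lmax_max.
  have h3 : 0 <= rho - (1 - tau * r) by lra.
  have h4 : 0 <= rho + (1 - tau * r) by lra.
  have := mulr_ge0 h3 h4.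
  nra.
have Fdiff : forall x y, Fw x - Fw y = (x - y) - tau *: (BA *m (x - y)).
  move=> x y; rewrite /Fw /BA !mulmxBr !mulmxA !scalerBr.
  move: (B *m gamma) (B *m Atilde R K *m x) (B *m Atilde R K *m y) => a b c.
  by apply/matrixP => i j; rewrite !mxE; lra.
have HF : forall z, V z -> norm2 (z - tau *: (BA *m z)) <= rho * norm2 z.
  move=> z Vz; have [w hw] := ker_perp_range BAsym Vz.
  have := contract_sq BAsym eigb w.
  have e1 : (z - tau *: (BA *m z))^T = w *m BA - tau *: (w *m BA *m BA).
    by rewrite linearB linearZ /= trmx_mul BAsym hw.
  rewrite -e1 -hw -!dotv_tr => H.
  rewrite /norm2 -(ger0_norm rho0) -sqrtr_sqr -sqrtrM ?sqr_ge0 //.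
  by rewrite ler_sqrt // mulr_ge0 ?sqr_ge0 ?dotv_ge0.
have VF : forall x, V x -> V (Fw x).
  by move=> x hx; apply: VD => //; apply: VZ; apply: HBV.
have VT : forall x, V x -> V (T x) by move=> x hx; apply: HDV; apply: VF.
set mb := Num.max beta 0.
have mb0 : 0 <= mb by rewrite le_max lexx orbT.
have mbb : beta <= mb by rewrite le_max lexx.
have mb1 : mb <= 1 by rewrite ge_max hb1 ler01.
set q := mb * rho.
have q0 : 0 <= q by apply: mulr_ge0.
have qrho : q <= rho by rewrite /q; nra.
have q1 : q < 1 by apply: le_lt_trans hrho1.
have HT : forall x y, V x -> V y -> norm2 (T x - T y) <= q * norm2 (x - y).
  move=> x y hx hy; rewrite /T.
  apply: le_trans (HDc _ _ (VF _ hx) (VF _ hy)) _.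
  apply: le_trans (ler_wpM2r (norm2_ge0 _) mbb) _.
  rewrite /q -mulrA; apply: ler_wpM2l => //.
  by rewrite Fdiff; apply: HF; apply: VB.
pose y n := iter n T 0.
have Vy : forall n, V (y n) by elim=> [|n IH] //=; apply: VT.
have ySn : forall n, y n.+1 = T (y n) by [].
set c0 := norm2 (y 1%N - y 0%N).
have c00 : 0 <= c0 by apply: norm2_ge0.
have step : forall k, norm2 (y k.+1 - y k) <= q ^+ k * c0.
  elim=> [|k IH]; first by rewrite expr0 mul1r.
  apply: le_trans (HT (y k.+1) (y k) (Vy _) (Vy _)) _.
  by rewrite exprS -mulrA; apply: ler_wpM2l.
have cstep : forall i k, `|y k i 0 - y k.+1 i 0| <= q ^+ k * c0.
  move=> i k; rewrite distrC; apply: le_trans (step k).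
  by have := coord_le (y k.+1 - y k) i; rewrite !mxE; apply.
have cauchy : forall i n m,
    (1 - q) * `|y n i 0 - y (n + m)%N i 0| <= c0 * (q ^+ n - q ^+ (n + m)).
  move=> i n; elim=> [|m IH]; first by rewrite addn0 !subrr normr0 !mulr0.
  have h1 := ler_distD (y (n + m)%N i 0) (y n i 0) (y (n + m).+1 i 0).
  have h2 := cstep i (n + m)%N.
  rewrite addnS exprS.
  move: h1 h2 IH; set a := `|_ - y (n + m).+1 i 0|; set b := `|y n i 0 - _|.
  set c := `|y (n + m)%N i 0 - _|; set p := q ^+ (n + m) => h1 h2 IH.
  have : (1 - q) * a <= (1 - q) * (b + c) by apply: ler_wpM2l; lra.
  have : (1 - q) * c <= (1 - q) * (p * c0) by apply: ler_wpM2l; lra.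
  nra.
have key : forall i n m, (n <= m)%N -> (1 - q) * `|y n i 0 - y m i 0| <= c0 * q ^+ n.
  move=> i n m nm; have := cauchy i n (m - n)%N; rewrite subnKC //.
  have : 0 <= c0 * q ^+ m by apply: mulr_ge0 => //; apply: exprn_ge0.
  rewrite mulrBr; lra.
set Cst := (1 - q)^-1 * c0.
have q1' : 0 < 1 - q by lra.
have Cst0 : 0 <= Cst by apply: mulr_ge0 => //; rewrite invr_ge0 ltW.
have bnd : forall i n m, `|y n i 0 - y m i 0| <= Cst * (q ^+ n + q ^+ m).
  move=> i n m; rewrite /Cst -mulrA ler_pdivlMl //.
  have hn := exprn_ge0 n q0; have hm := exprn_ge0 m q0.
  case: (leqP n m) => [nm|/ltnW mn].
    by have := key i n m nm; nra.
  by have := key i m n mn; rewrite distrC; nra.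
pose E i : R -> Prop := fun v => exists n, v = y n i 0 - Cst * q ^+ n.
pose L i := sup (E i).
have hE : forall i, has_sup (E i).
  move=> i; split; first by exists (y 0%N i 0 - Cst * q ^+ 0); exists 0%N.
  exists (y 0%N i 0 + Cst * q ^+ 0) => _ [n ->].
  by have := bnd i n 0%N; rewrite ler_norml => /andP[? ?]; lra.
have hL : forall i n, `|y n i 0 - L i| <= Cst * q ^+ n.
  move=> i n; rewrite ler_distl; apply/andP; split.
    rewrite lerBlDr; apply: ge_sup; first by case: (hE i).
    move=> _ [m ->]; have := bnd i m n; rewrite ler_norml => /andP[? ?]; lra.
  have := sup_upper_bound (hE i) (ex_intro _ n erefl); rewrite /L; lra.
pose Lv : 'cV[R]_(K * K) := \col_i L i.
have hLv : forall n, norm2 (Lv - y n) <= Num.sqrt (K * K)%:R * (Cst * q ^+ n).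
  move=> n; apply: norm2_coord_bound; first by apply: mulr_ge0 => //; apply: exprn_ge0.
  by move=> i; rewrite !mxE distrC.
have VL : V Lv.
  move=> w hw; apply/normr0_eq0/eqP; rewrite eq_le normr_ge0 andbT.
  apply: (@geo0 _ _ (Cst * \sum_i `|w i 0|) q) => // n.
  have -> : dotv Lv w = dotv (Lv - y n) w by rewrite dotvBl (Vy n w hw) subr0.
  rewrite /dotv; apply: le_trans (ler_norm_sum _ _ _) _.
  rewrite mulr_sumr mulr_suml; apply: ler_sum => i _.
  rewrite normrM mulrAC; apply: ler_wpM2r; first exact: normr_ge0.
  by rewrite !mxE distrC.
have TL : T Lv = Lv.
  apply/eqP; rewrite -subr_eq0; apply/eqP/matrixP => i j; rewrite ord1 !mxE.
  apply/normr0_eq0/eqP; rewrite eq_le normr_ge0 andbT.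
  have s0 : 0 <= Num.sqrt (K * K)%:R :> R by apply: sqrtr_ge0.
  move: s0 hLv; set s := Num.sqrt _ => s0 hLv.
  apply: (@geo0 _ _ (q * s * Cst + Cst * q) q) => // n.
  have h1 : `|(T Lv - y n.+1) i 0| <= q * norm2 (Lv - y n).
    exact: le_trans (coord_le _ _) (HT _ _ VL (Vy n)).
  have h2 := hL i n.+1.
  have h3 := hLv n.
  rewrite mxE in h1.
  have h4 := ler_distD (y n.+1 i 0) (T Lv i 0) (Lv i 0).
  rewrite [Lv i 0]mxE in h4; rewrite !mxE in h1.
  have h5 : q * norm2 (Lv - y n) <= q * (s * (Cst * q ^+ n)) by apply: ler_wpM2l.
  rewrite exprS in h2.
  have : 0 <= q ^+ n by apply: exprn_ge0.
  move: h1 h2 h3 h4 h5; set p := q ^+ n => h1 h2 h3 h4 h5 hp.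
  nra.
exists Lv; split => //.
  move=> k' Vk' Tk'.
  have h := HT _ _ Vk' VL; rewrite Tk' TL in h.
  have h0 := norm2_ge0 (k' - Lv).
  have : norm2 (k' - Lv) = 0 by nra.
  by move/norm2_eq0/eqP; rewrite subr_eq0 => /eqP.
move=> k0 Vk0; elim=> [|k IH]; first by rewrite expr0 mul1r.
have Vi : V (iter k T k0) by elim: k {IH} => [|k IHk] //=; apply: VT.
have := HT _ _ Vi VL; rewrite TL iterS => h; apply: le_trans h _.
rewrite exprS -mulrA; apply: (@le_trans _ _ (rho * norm2 (iter k T k0 - Lv))).
  by apply: ler_wpM2r => //; apply: norm2_ge0.
by apply: ler_wpM2l.
Qed.
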